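(* Consider the control-affine system $\dot x = f(x) + g(x)u$ with $f:\mathbb{R}^n\to\mathbb{R}^n$, $g:\mathbb{R}^n\to\mathbb{R}^{n\times m}$ locally Lipschitz, a continuously differentiable function $h:\mathbb{R}^n\to\mathbb{R}$ with safe set $\mathcal{C}=\{x:h(x)\ge0\}$ and boundary $\partial\mathcal{C}=\{x:h(x)=0\}$, and a controller $k:\mathbb{R}^n\to\mathbb{R}^m$ satisfying $L_fh(x)+L_gh(x)k(x)\ge-\alpha(h(x))$ for all $x\in\mathcal{C}$, with $\alpha$ a class-$\mathcal{K}_\infty^e$ function. Let $d>0$, $\delta>0$, $c>\frac{d}{\alpha(\delta)}$ and $\alpha'(r)=(1+c)\alpha(r)$. Assume: (i) there is $\mu>0$ with $\|L_gh(x)\|\ge\mu$ for all $x\in\partial\mathcal{C}$; (ii) $L_gh$ is Lipschitz on $\mathcal{C}$: there is $M>0$ with $\|L_gh(x)-L_gh(y)\|\le M\|x-y\|$ for all $x,y\in\mathcal{C}$; (iii) there is a class-$\mathcal{K}$ function $\beta$ with $h(x)\ge\beta\big(\inf_{y\in\partial\mathcal{C}}\|x-y\|\big)$. Define the adjusted controller $k_a(x) = k(x) + \frac{1}{\varepsilon}L_gh(x)^\top$ with $0<\varepsilon\le\frac{\mu^2}{4d}$. Then $$\dot h(x,k_a(x)) := L_fh(x)+L_gh(x)k_a(x) \ge -\alpha'(h(x)) + d$$ for all $x\in\mathcal{C}$ for which there exists $y\in\partial\mathcal{C}$ with $\|x-y\|\le\frac{\mu}{2M}$.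
   Context: $L_fh(x) = \frac{\partial h}{\partial x}(x)f(x)$, $L_gh(x) = \frac{\partial h}{\partial x}(x)g(x)$ (a row vector). A function $\alpha:[-b,a)\to\mathbb{R}$ is of class-$\mathcal{K}_\infty^e$ if it is continuous, strictly increasing, $\alpha(0)=0$, $\lim_{s\to\infty}\alpha(s)=\infty$, and $\alpha(y)\le0$ for $y\in[-b,0]$. A class-$\mathcal{K}$ function is a continuous strictly increasing function $\beta:[0,a)\to\mathbb{R}_{\ge0}$ with $\beta(0)=0$. *)

(* Defs.v *)
From HB Require Import structures.
From mathcomp Require Import all_boot all_order all_algebra.
From mathcomp Require Import all_classical all_reals all_analysis.
Set Implicit Arguments. Unset Strict Implicit. Unset Printing Implicit Defensive.
Import Order.TTheory GRing.Theory Num.Theory.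
Import numFieldNormedType.Exports.
Local Open Scope classical_set_scope.
Local Open Scope ring_scope.

(* Euclidean (Frobenius) norm of a matrix; for row/column vectors this is
   the usual Euclidean norm ||.||. *)
Definition enorm (R : realType) (p q : nat) (A : 'M[R]_(p, q)) : R :=
  Num.sqrt (\sum_(i < p) \sum_(j < q) A i j ^+ 2).

Definition locally_lipschitz (R : realType) (n p q : nat)
  (F : 'cV[R]_n -> 'M[R]_(p, q)) : Prop :=
  forall x : 'cV[R]_n, exists r : R, exists L : R, 0 < r /\ 0 <= L /\
    forall y z : 'cV[R]_n, enorm (y - x) < r -> enorm (z - x) < r ->
      enorm (F y - F z) <= L * enorm (y - z).

Definition C1_with_gradient (R : realType) (n : nat)
  (h : 'cV[R]_n -> R) (Dh : 'cV[R]_n -> 'rV[R]_n) : Prop :=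
  (forall x, differentiable h x /\ ('d h x : 'cV[R]_n -> R) = (fun v => (Dh x *m v) 0 0))
  /\ continuous Dh.

Definition Lie_f (R : realType) (n : nat) (Dh : 'cV[R]_n -> 'rV[R]_n)
  (f : 'cV[R]_n -> 'cV[R]_n) (x : 'cV[R]_n) : R := (Dh x *m f x) 0 0.
Definition Lie_g (R : realType) (n m : nat) (Dh : 'cV[R]_n -> 'rV[R]_n)
  (g : 'cV[R]_n -> 'M[R]_(n, m)) (x : 'cV[R]_n) : 'rV[R]_m := Dh x *m g x.

Definition class_Kinf_e (R : realType) (alpha : R -> R) : Prop :=
  exists b : R, 0 <= b /\
    {within `[-b, +oo[, continuous alpha} /\
    {in `[-b, +oo[ &, forall s t, s < t -> alpha s < alpha t} /\
    alpha 0 = 0 /\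
    alpha @ +oo --> +oo /\
    {in `[-b, 0], forall y, alpha y <= 0}.

Definition class_K (R : realType) (a : \bar R) (beta : R -> R) : Prop :=
  (0 < a)%E /\
  {within [set s | 0 <= s /\ (s%:E < a)%E], continuous beta} /\
  {in [set s | 0 <= s /\ (s%:E < a)%E] &, forall s t, s < t -> beta s < beta t} /\
  beta 0 = 0 /\
  (forall s, 0 <= s -> (s%:E < a)%E -> 0 <= beta s).

Definition dist_boundary (R : realType) (n : nat) (h : 'cV[R]_n -> R)
  (x : 'cV[R]_n) : R :=
  inf [set enorm (x - y) | y in [set y | h y = 0]].

(* Main.v *)
Require Import Defs.
From HB Require Import structures.
From mathcomp Require Import all_boot all_order all_algebra.
From mathcomp Require Import all_classical all_reals all_analysis.
From mathcomp Require Import ring lra.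
Import Order.TTheory GRing.Theory Num.Theory.
Import numFieldNormedType.Exports.
Local Open Scope classical_set_scope.
Local Open Scope ring_scope.

Theorem lemma3 (R : realType) (n m : nat)
  (f : 'cV[R]_n -> 'cV[R]_n) (g : 'cV[R]_n -> 'M[R]_(n, m))
  (h : 'cV[R]_n -> R) (Dh : 'cV[R]_n -> 'rV[R]_n)
  (k : 'cV[R]_n -> 'cV[R]_m) (alpha : R -> R)
  (d delta c mu M eps : R) :
  locally_lipschitz f -> locally_lipschitz g ->
  C1_with_gradient h Dh ->
  class_Kinf_e alpha ->
  (forall x, 0 <= h x ->
     Lie_f Dh f x + (Lie_g Dh g x *m k x) 0 0 >= - alpha (h x)) ->
  0 < d -> 0 < delta -> c > d / alpha delta ->
  (* (i) *)
  0 < mu -> (forall x, h x = 0 -> enorm (Lie_g Dh g x) >= mu) ->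
  (* (ii) *)
  0 < M -> (forall x y, 0 <= h x -> 0 <= h y ->
     enorm (Lie_g Dh g x - Lie_g Dh g y) <= M * enorm (x - y)) ->
  (* (iii) *)
  (exists (a : \bar R) (beta : R -> R), class_K a beta /\
     forall x, 0 <= h x -> ((dist_boundary h x)%:E < a)%E /\
                           beta (dist_boundary h x) <= h x) ->
  0 < eps -> eps <= mu ^+ 2 / (4 * d) ->
  let alpha' := fun r => (1 + c) * alpha r in
  let ka := fun x => k x + eps^-1 *: (Lie_g Dh g x)^T in
  forall x, 0 <= h x ->
    (exists y, h y = 0 /\ enorm (x - y) <= mu / (2 * M)) ->
    Lie_f Dh f x + (Lie_g Dh g x *m ka x) 0 0 >= - alpha' (h x) + d.
Proof.
move=> _ _ _ [b [b0 [_ [mono [a0 _]]]]] Hk d0 del0 Hc mu0 Hmu M0 HL _ eps0 Heps alpha' ka x hx [y [hy Hxy]].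
set u := Lie_g Dh g x.
set v := Lie_g Dh g y.
have Hu : (u *m ka x) 0 0 = (u *m k x) 0 0 + eps^-1 * \sum_(j < m) u 0 j ^+ 2.
  rewrite /ka mulmxDr -scalemxAr [LHS]mxE [X in _ + X]mxE mxE; congr (_ + _ * _).
  rewrite mxE; apply: eq_bigr => j _; by rewrite [_^T _ _]mxE expr2.
pose sq (A : 'rV[R]_m) := \sum_(i < 1) \sum_(j < m) A i j ^+ 2.
have sq0 A : 0 <= sq A by apply: sumr_ge0 => i _; apply: sumr_ge0 => j _; apply: sqr_ge0.
have en A : enorm A ^+ 2 = sq A by rewrite /enorm sqr_sqrtr; last exact: sq0.
have en0 (A : 'rV[R]_m) : 0 <= enorm A by apply: sqrtr_ge0.
have Hw : enorm (u - v) <= mu / 2.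
  apply: le_trans (HL x y hx _) _; first by rewrite hy.
  apply: le_trans (ler_wpM2l (ltW M0) Hxy) _.
  suff -> : M * (mu / (2 * M)) = mu / 2 by [].
  by field; apply/lt0r_neq0.
have Hw2 : sq (u - v) <= mu ^+ 2 / 4.
  rewrite -en. have := ler_pM (en0 _) (en0 _) Hw Hw. rewrite -!expr2 => H.
  apply: le_trans H _.
  suff -> : (mu / 2) ^+ 2 = mu ^+ 2 / 4 by [].
  by field.
have Hv2 : mu ^+ 2 <= sq v.
  rewrite -en; have := ler_pM (ltW mu0) (ltW mu0) (Hmu y hy) (Hmu y hy).
  by rewrite -!expr2.
have Huv : sq v <= 2 * sq u + 2 * sq (u - v).
  rewrite /sq !mulr_sumr -big_split /=; apply: ler_sum => i _.
  rewrite !mulr_sumr -big_split /=; apply: ler_sum => j _.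
  have -> : (u - v) i j = u i j - v i j by rewrite !mxE.
  move: (u i j) (v i j) => a bb.
  rewrite -subr_ge0.
  have -> : 2 * a ^+ 2 + 2 * (a - bb) ^+ 2 - bb ^+ 2 = (2 * a - bb) ^+ 2 by ring.
  exact: sqr_ge0.
have Su : mu ^+ 2 / 4 <= \sum_(j < m) u 0 j ^+ 2.
  have -> : \sum_(j < m) u 0 j ^+ 2 = sq u by rewrite /sq big_ord1.
  lra.
have Hed : d <= eps^-1 * \sum_(j < m) u 0 j ^+ 2.
  rewrite -(ler_pM2l eps0) mulrA mulfV ?mul1r; last by apply/lt0r_neq0.
  move: Heps; rewrite ler_pdivlMr; last by rewrite mulr_gt0.
  nra.
have inD t : 0 <= t -> t \in `[-b, +oo[.
  move=> t0; rewrite in_itv /= andbT; apply: le_trans t0; by rewrite oppr_le0.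
have ad : 0 < alpha delta.
  rewrite -a0; apply: mono; rewrite ?inD //; exact: ltW.
have c0 : 0 < c.
  apply: lt_trans Hc; exact: divr_gt0.
have ah : 0 <= alpha (h x).
  case: (eqVneq (h x) 0) => [->|hne]; first by rewrite a0.
  rewrite -a0; apply/ltW/mono; rewrite ?inD //.
  by rewrite lt_neqAle eq_sym hne hx.
have := Hk x hx. rewrite Hu /alpha' mulrDl mul1r.
have := mulr_ge0 (ltW c0) ah.
lra.
Qed.
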